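(* Let $S$ be a semigroup with finite $\mathcal{R}$-height, and let $A$ be a left ideal of $S$ such that every element of $A$ is a regular element of $S$. Then $\mathrm{H}_{\mathcal{R}}(A)=n$, where $n$ is the maximal length of a chain of $\mathcal{R}$-classes of $S$ each of which intersects $A$.
   Context: An element $a\in S$ is regular if $a=aba$ for some $b\in S$. For a semigroup $S$, $S^1$ denotes $S$ with an identity adjoined if necessary. Green's preorder: $a\leq_{\mathcal{R}} b$ iff $aS^1\subseteq bS^1$; $\mathcal{R}$ is the associated equivalence. $\mathcal{R}$-classes are ordered by $R_a\leq R_b$ iff $a\leq_{\mathcal{R}} b$, and the $\mathcal{R}$-height $\mathrm{H}_{\mathcal{R}}$ is the supremum of the cardinalities of chains of $\mathcal{R}$-classes. A left ideal is a non-empty subset $A$ with $SA\subseteq A$; $\mathrm{H}_{\mathcal{R}}(A)$ is computed in the semigroup $A$ itself. *)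

(* Defs.v *)
From Stdlib Require Import List.
Import ListNotations.

Section Semigroups.
Variable T : Type.
Variable op : T -> T -> T.

Definition regular (a : T) : Prop := exists b, a = op (op a b) a.

(* Green's R-preorder in S: a S^1 ⊆ b S^1, i.e. a = b or a = b c for some c in S *)
Definition leR (a b : T) : Prop := a = b \/ exists c, a = op b c.
Definition eqR (a b : T) : Prop := leR a b /\ leR b a.

(* Green's R-preorder computed in the subsemigroup A (A closed under op):
   a A^1 ⊆ b A^1, i.e. a = b or a = b c for some c in A *)
Definition leR_in (A : T -> Prop) (a b : T) : Prop :=
  a = b \/ exists c, A c /\ a = op b c.
Definition eqR_in (A : T -> Prop) (a b : T) : Prop := leR_in A a b /\ leR_in A b a.

(* A chain of R-classes is given by a list of representatives whose R-classes
   are pairwise distinct and pairwise comparable; its cardinality is the length. *)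
Definition chain_wrt (le : T -> T -> Prop) (l : list T) : Prop :=
  ForallOrdPairs (fun x y => (le x y \/ le y x) /\ ~ (le x y /\ le y x)) l.

Definition R_chain (l : list T) : Prop := chain_wrt leR l.

(* Chains of R-classes of S each of which intersects A
   (representatives chosen in A) *)
Definition R_chain_meeting (A : T -> Prop) (l : list T) : Prop :=
  Forall A l /\ chain_wrt leR l.

Definition R_chain_in (A : T -> Prop) (l : list T) : Prop :=
  Forall A l /\ chain_wrt (leR_in A) l.

Definition finite_R_height : Prop :=
  exists N : nat, forall l, R_chain l -> length l <= N.

Definition left_ideal (A : T -> Prop) : Prop :=
  (exists a, A a) /\ forall s a, A a -> A (op s a).

End Semigroups.

Definition is_max_length {T : Type} (P : list T -> Prop) (n : nat) : Prop :=
  (exists l, P l /\ length l = n) /\ (forall l, P l -> length l <= n).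

(* Main.v *)
Require Import Defs.
From Stdlib Require Import List Classical Lia.

Lemma fop_transfer {T : Type} (A : T -> Prop) (R R' : T -> T -> Prop)
  (H : forall x y, A x -> A y -> R x y -> R' x y) :
  forall l, Forall A l -> ForallOrdPairs R l -> ForallOrdPairs R' l.
Proof.
  induction l as [|a l IH]; intros HA HR; [constructor|].
  apply Forall_cons_iff in HA as [Ha HA].
  inversion HR as [|a' l' Hr HR']; subst. constructor; [|auto].
  clear IH HR HR'. induction l as [|b l IH2]; constructor.
  - apply Forall_cons_iff in HA as [Hb _]. inversion Hr; subst; auto.
  - apply Forall_cons_iff in HA as [_ HA]. inversion Hr; subst; auto.
Qed.

Lemma max_exists {T : Type} (P : list T -> Prop) :
  forall m, (forall l, P l -> length l <= m) -> (exists l, P l) ->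
  exists n, is_max_length P n.
Proof.
  induction m as [|m IH]; intros Hb [l0 Hl0].
  - exists 0. split.
    + exists l0. split; auto. specialize (Hb l0 Hl0). lia.
    + auto.
  - destruct (classic (exists l, P l /\ length l = S m)) as [Hy|Hn].
    + exists (S m). split; auto.
    + apply IH; [|eauto]. intros l Hl. specialize (Hb l Hl).
      assert (length l <> S m) by (intro E; apply Hn; eauto). lia.
Qed.

Theorem proposition3p12 (T : Type) (op : T -> T -> T)
  (assoc : forall x y z, op x (op y z) = op (op x y) z)
  (A : T -> Prop)
  (hfin : finite_R_height T op)
  (hA : left_ideal T op A)
  (hreg : forall a, A a -> regular T op a) :
  (exists n, is_max_length (R_chain_meeting T op A) n) /\
  (forall n, is_max_length (R_chain_meeting T op A) n ->
             is_max_length (R_chain_in T op A) n).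
Proof.
  destruct hA as [_ hL].
  assert (Heq : forall a b, A a -> A b -> (leR T op a b <-> leR_in T op A a b)).
  { intros a b Ha Hb; split.
    - intros [E|[c E]]; [left; auto|right].
      destruct (hreg b Hb) as [x Ex].
      exists (op x a). split; [apply hL; auto|].
      rewrite E at 2. rewrite assoc, assoc, <- Ex. exact E.
    - intros [E|[c [_ E]]]; [left; auto|right; eauto]. }
  assert (Hc : forall l, R_chain_meeting T op A l <-> R_chain_in T op A l).
  { intros l; split; intros [HF HC]; split; auto;
      unfold chain_wrt in *; revert HF HC; apply fop_transfer;
      intros x y Hx Hy [[H1|H1] H2]; split;
      try (left; apply Heq; auto; fail);
      try (right; apply Heq; auto; fail);
      try (left; apply Heq; auto; fail);
      try (right; apply Heq; auto; fail);
      intros [H3 H4]; apply H2; split; apply Heq; auto. }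
  split.
  - destruct hfin as [N HN]. apply (max_exists _ N).
    + intros l [_ Hl]. apply HN. exact Hl.
    + exists nil. split; constructor.
  - intros n [[l [Hl Hlen]] Hm]. split.
    + exists l. split; auto. apply Hc; auto.
    + intros l' Hl'. apply Hm. apply Hc; auto.
Qed.
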